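(* For every $\lambda\in\mathbb{R}$, the real $7$-dimensional Lie algebra $\mathfrak{n}_\lambda$ with basis $e_1,\dots,e_7$ whose nonzero brackets (up to antisymmetry) are $[e_1,e_2]=e_4$, $[e_1,e_3]=e_6$, $[e_1,e_4]=e_5$, $[e_1,e_5]=e_7$, $[e_2,e_3]=\lambda e_5$, $[e_2,e_4]=e_6$, $[e_2,e_6]=e_7$, $[e_3,e_4]=(1-\lambda)e_7$ is an Einstein nilradical.
   Context: A real nilpotent Lie algebra $\mathfrak{n}$ is called an Einstein nilradical if it admits an inner product such that the left-invariant Riemannian metric it defines on the simply connected nilpotent Lie group with Lie algebra $\mathfrak{n}$ is a nilsoliton, i.e. its Ricci operator satisfies $\mathrm{Ric}=c\,\mathrm{Id}+D$ for some $c\in\mathbb{R}$ and some derivation $D$ of $\mathfrak{n}$. Brackets of basis elements not listed are zero. *)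

(* Defs.v *)
From HB Require Import structures.
From mathcomp Require Import all_boot all_order all_algebra.
From mathcomp Require Import Rstruct.
Set Implicit Arguments. Unset Strict Implicit. Unset Printing Implicit Defensive.
Import Order.TTheory GRing.Theory Num.Theory.
Local Open Scope ring_scope.

Section MetricLie.
Variable F : realFieldType.
Variable n : nat.
Variable br : 'I_n -> 'I_n -> 'cV[F]_n.
Variable G : 'M[F]_n.

Definition lie (x y : 'cV[F]_n) : 'cV[F]_n :=
  \sum_(i < n) \sum_(j < n) (x i 0 * y j 0) *: br i j.

Definition ad_mx (x : 'cV[F]_n) : 'M[F]_n := \matrix_(k, j) (lie x (delta_mx j 0)) k 0.

Definition ip (x y : 'cV[F]_n) : F := (x^T *m G *m y) 0 0.

Definition is_inner_product : Prop :=
  G^T = G /\ forall x : 'cV[F]_n, x != 0 -> 0 < ip x x.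

(* metric adjoint of ad_x : <ad_x^* y, z> = <y, [x,z]> *)
Definition ad_adj (x y : 'cV[F]_n) : 'cV[F]_n := invmx G *m (ad_mx x)^T *m G *m y.

(* Levi-Civita connection of the left-invariant metric on left-invariant fields
   (Koszul formula): 2 nabla_x y = [x,y] - ad_x^* y - ad_y^* x *)
Definition nabla (x y : 'cV[F]_n) : 'cV[F]_n :=
  2^-1 *: (lie x y - ad_adj x y - ad_adj y x).

Definition curv (x y z : 'cV[F]_n) : 'cV[F]_n :=
  nabla x (nabla y z) - nabla y (nabla x z) - nabla (lie x y) z.

Definition ric (y z : 'cV[F]_n) : F :=
  \sum_(j < n) (curv (delta_mx j 0) y z) j 0.

(* Ricci operator Ric, defined by <Ric y, z> = ric(y, z) *)
Definition ricci_op : 'M[F]_n :=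
  invmx G *m (\matrix_(i, j) ric (delta_mx j 0) (delta_mx i 0)).

Definition is_derivation (D : 'M[F]_n) : Prop :=
  forall x y : 'cV[F]_n, D *m lie x y = lie (D *m x) y + lie x (D *m y).

Definition is_nilsoliton : Prop :=
  exists (c : F) (D : 'M[F]_n), is_derivation D /\ ricci_op = c%:M + D.
End MetricLie.

Definition einstein_nilradical (F : realFieldType) (n : nat)
    (br : 'I_n -> 'I_n -> 'cV[F]_n) : Prop :=
  exists G : 'M[F]_n, is_inner_product G /\ is_nilsoliton br G.

(* The algebra n_lambda; basis e_1..e_7 is indexed 0..6. *)
Definition e7 (k : nat) : 'cV[Rdefinitions.R]_7 := delta_mx (inord k) 0.

Definition nlam_upper (lam : Rdefinitions.R) (i j : nat) : 'cV[Rdefinitions.R]_7 :=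
  match i, j with
  | 0, 1 => e7 3
  | 0, 2 => e7 5
  | 0, 3 => e7 4
  | 0, 4 => e7 6
  | 1, 2 => lam *: e7 4
  | 1, 3 => e7 5
  | 1, 5 => e7 6
  | 2, 3 => (1 - lam) *: e7 6
  | _, _ => 0
  end.

Definition n_lambda (lam : Rdefinitions.R) (i j : 'I_7) : 'cV[Rdefinitions.R]_7 :=
  if (i < j)%N then nlam_upper lam i j
  else if (j < i)%N then - nlam_upper lam j i else 0.

(* Main.v *)
Require Import Defs.
From mathcomp Require Import all_boot all_order all_algebra.
From mathcomp Require Import Rstruct.
From Stdlib Require Reals Lra Psatz.

Module ExPart.
Import Reals Lra Psatz.
Local Open Scope R_scope.
Definition Pf (a q : R) : R := (sqrt (1 + 4 * a^2 * (Rabs q * (Rabs q + 1))) - 1) / 2.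

Lemma Pf_cont a : continuity (Pf a).
Proof.
intro x. unfold Pf.
apply continuity_pt_div; [| apply continuity_pt_const; intros u v; reflexivity | lra].
apply continuity_pt_minus; [| apply continuity_pt_const; intros u v; reflexivity].
apply (continuity_pt_comp (fun q => 1 + 4 * a^2 * (Rabs q * (Rabs q + 1))) sqrt).
- apply continuity_pt_plus; [apply continuity_pt_const; intros u v; reflexivity|].
  apply continuity_pt_mult; [apply continuity_pt_const; intros u v; reflexivity|].
  apply continuity_pt_mult; [apply Rcontinuity_abs|].
  apply continuity_pt_plus; [apply Rcontinuity_abs|apply continuity_pt_const; intros u v; reflexivity].
- apply continuity_pt_sqrt.
  pose proof (Rabs_pos x). pose proof (pow2_ge_0 a). nra.
Qed.

Lemma Pf_prop a q : 0 <= q -> 0 <= Pf a q /\ Pf a q * (Pf a q + 1) = a^2 * q * (q + 1).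
Proof.
intro hq. unfold Pf. assert (Hqq : Rabs q = q) by (apply Rabs_pos_eq; lra). rewrite Hqq.
pose (t := 1 + 4 * a ^ 2 * (q * (q + 1))). fold t.
assert (ht : 1 <= t) by (unfold t; pose proof (pow2_ge_0 a); nra).
pose proof (sqrt_sqrt t ltac:(lra)).
assert (1 <= sqrt t) by (rewrite <- sqrt_1; apply sqrt_le_1_alt; lra).
split; [lra|].
unfold t in *. nra.
Qed.

Lemma Pf_pos a q : 0 < q -> a <> 0 -> 0 < Pf a q.
Proof.
intros hq ha. unfold Pf. assert (Hqq : Rabs q = q) by (apply Rabs_pos_eq; lra). rewrite Hqq.
assert (0 < a^2) by (assert (0 < a*a) by (apply Rsqr_pos_lt; auto); simpl; nra).
assert (1 < 1 + 4 * a ^ 2 * (q * (q + 1))) by nra.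
assert (Hs1 : sqrt 1 < sqrt (1 + 4 * a ^ 2 * (q * (q + 1)))) by (apply sqrt_lt_1_alt; lra).
rewrite sqrt_1 in Hs1.
lra.
Qed.

Lemma Pf0 a : Pf a 0 = 0.
Proof. unfold Pf. rewrite Rabs_R0. replace (1 + 4 * a ^ 2 * (0 * (0 + 1))) with 1 by ring.
rewrite sqrt_1. lra. Qed.

Lemma exists_pqm (lam : R) : exists p q m : R,
  0 <= p /\ 0 < q /\ 0 <= m /\ p + q + m = 1 + 1 + 1 /\
  p * (p + 1) = lam * lam * (q * (q + 1)) /\
  m * (m + 1) = (1 - lam) * (1 - lam) * (q * (q + 1)).
Proof.
pose (f := fun q => Pf lam q + q + Pf (1 - lam) q - 3).
assert (fc : continuity f).
{ unfold f. intro x. repeat apply continuity_pt_minus || apply continuity_pt_plus.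
  all: first [apply Pf_cont | apply derivable_continuous_pt, derivable_pt_id | apply continuity_pt_const; intros u v; reflexivity]. }
assert (f0 : f 0 < 0) by (unfold f; rewrite !Pf0; lra).
assert (f3 : 0 < f 3).
{ unfold f. destruct (Req_dec lam 0) as [h|h].
  - assert (0 < Pf (1 - lam) 3) by (apply Pf_pos; lra).
    destruct (Pf_prop lam 3) as [? _]; lra.
  - assert (0 < Pf lam 3) by (apply Pf_pos; lra).
    destruct (Pf_prop (1 - lam) 3) as [? _]; lra. }
destruct (IVT f 0 3 fc ltac:(lra) f0 f3) as [z [[hz0 hz3] hz]].
assert (zpos : 0 < z).
{ destruct (Rle_lt_or_eq_dec 0 z hz0) as [h|h]; auto. subst z. lra. }
destruct (Pf_prop lam z) as [hp1 hp2]; [lra|].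
destruct (Pf_prop (1 - lam) z) as [hm1 hm2]; [lra|].
exists (Pf lam z), z, (Pf (1 - lam) z).
unfold f in hz. repeat split; try lra.
Qed.

End ExPart.
Import ExPart.

From HB Require Import structures.
From mathcomp Require Import ring.
Set Implicit Arguments. Unset Strict Implicit. Unset Printing Implicit Defensive.
Import Order.TTheory GRing.Theory Num.Theory.
Local Open Scope ring_scope.

Section Gen.
Variable F : realFieldType.
Variable n : nat.
Variable br : 'I_n -> 'I_n -> 'cV[F]_n.
Variable g : 'I_n -> F.
Hypothesis gnz : forall i, g i != 0.

Definition Gd : 'M[F]_n := diag_mx (\row_i g i).
Definition Cc a b k := br a b k 0.
Definition Gam a b k : F :=
  2^-1 * (Cc a b k - (g k)^-1 * g b * Cc a k b - (g k)^-1 * g a * Cc b k a).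

Lemma sum_delta (j : 'I_n) (f : 'I_n -> F) :
  \sum_a (delta_mx j 0 : 'cV[F]_n) a 0 * f a = f j.
Proof.
rewrite (bigD1 j) //= big1 ?addr0; first by rewrite mxE !eqxx mul1r.
by move=> a /negbTE naj; rewrite mxE naj mul0r.
Qed.

Lemma invG : invmx Gd = diag_mx (\row_i (g i)^-1).
Proof.
have H : Gd *m diag_mx (\row_i (g i)^-1) = 1%:M.
  rewrite /Gd mulmx_diag -diag_const_mx; congr diag_mx.
  by apply/matrixP=> i j; rewrite !mxE divff // ord1.
have [U _] := mulmx1_unit H.
by rewrite -[RHS]mul1mx -(mulVmx U) -mulmxA H mulmx1.
Qed.

Lemma lieE x y k : lie br x y k 0 = \sum_a \sum_b x a 0 * y b 0 * Cc a b k.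
Proof.
rewrite /lie summxE; apply: eq_bigr => a _; rewrite summxE; apply: eq_bigr => b _.
by rewrite mxE.
Qed.

Lemma sum_delta2 (j : 'I_n) (c : F) (f : 'I_n -> F) :
  \sum_b c * (delta_mx j 0 : 'cV[F]_n) b 0 * f b = c * f j.
Proof.
rewrite (bigD1 j) //= big1 ?addr0; first by rewrite mxE !eqxx mulr1.
by move=> a /negbTE naj; rewrite mxE naj mulr0 mul0r.
Qed.

Lemma adjE x y k : ad_adj br Gd x y k 0 =
  \sum_a \sum_b x a 0 * y b 0 * ((g k)^-1 * g b * Cc a k b).
Proof.
rewrite /ad_adj invG mul_diag_mx /Gd mul_mx_diag mxE.
under eq_bigr => l _ do rewrite !mxE lieE.
under eq_bigr => l _ do under eq_bigr => a _ do rewrite sum_delta2.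
under eq_bigr => l _ do rewrite mulr_sumr !mulr_suml.
rewrite exchange_big /=; apply: eq_bigr => a _.
apply: eq_bigr => b _; ring.
Qed.

Lemma mxB (u v : 'cV[F]_n) k : (u - v) k 0 = u k 0 - v k 0.
Proof. by rewrite !mxE. Qed.
Lemma mxD (u v : 'cV[F]_n) k : (u + v) k 0 = u k 0 + v k 0.
Proof. by rewrite !mxE. Qed.
Lemma mxZ (c : F) (u : 'cV[F]_n) k : (c *: u) k 0 = c * u k 0.
Proof. by rewrite !mxE. Qed.

Lemma nablaE x y k : nabla br Gd x y k 0 = \sum_a \sum_b x a 0 * y b 0 * Gam a b k.
Proof.
rewrite /nabla mxZ !mxB lieE !adjE.
rewrite [X in _ - X]exchange_big /=.
rewrite -!sumrB mulr_sumr; apply: eq_bigr => a _.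
rewrite -!sumrB mulr_sumr; apply: eq_bigr => b _.
rewrite /Gam; ring.
Qed.

Lemma nabla_delta a b k :
  nabla br Gd (delta_mx a 0) (delta_mx b 0) k 0 = Gam a b k.
Proof.
rewrite nablaE; under eq_bigr => c _ do rewrite sum_delta2.
by rewrite sum_delta.
Qed.

Lemma nabla_deltal a y k :
  nabla br Gd (delta_mx a 0) y k 0 = \sum_b y b 0 * Gam a b k.
Proof.
rewrite nablaE; under eq_bigr => c _ do under eq_bigr => b _ do rewrite -mulrA.
under eq_bigr => c _ do rewrite -mulr_sumr.
by rewrite sum_delta.
Qed.

Lemma ricE j i : ric br Gd (delta_mx j 0) (delta_mx i 0) =
  \sum_l (\sum_b Gam j i b * Gam l b l - \sum_b Gam l i b * Gam j b l
           - \sum_a Cc l j a * Gam a i l).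
Proof.
rewrite /ric; apply: eq_bigr => l _.
rewrite /curv !mxB !nabla_deltal nablaE.
under [X in _ - X]eq_bigr => a _ do rewrite sum_delta2.
congr (_ - _ - _); apply: eq_bigr => b _; rewrite ?nabla_delta //.
rewrite lieE; under eq_bigr => a _ do rewrite sum_delta2.
by rewrite sum_delta.
Qed.

Lemma ricciE : ricci_op br Gd =
  \matrix_(i, j) ((g i)^-1 * ric br Gd (delta_mx j 0) (delta_mx i 0)).
Proof.
rewrite /ricci_op invG mul_diag_mx; apply/matrixP => i j; rewrite !mxE //.
Qed.

Lemma diag_deriv (d : 'I_n -> F) :
  (forall a b k, Cc a b k * (d k - d a - d b) = 0) ->
  is_derivation br (diag_mx (\row_i d i)).
Proof.
move=> H x y; apply/matrixP => k c; rewrite (ord1 c).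
have DE : forall (v : 'cV[F]_n) a, (diag_mx (\row_i d i) *m v) a 0 = d a * v a 0.
  by move=> v a; rewrite mul_diag_mx !mxE.
rewrite mxD DE !lieE.
under [X in _ = X + _]eq_bigr => a _ do under eq_bigr => b _ do rewrite DE.
under [X in _ = _ + X]eq_bigr => a _ do under eq_bigr => b _ do rewrite DE.
rewrite -big_split mulr_sumr /=; apply: eq_bigr => a _.
rewrite -big_split mulr_sumr /=; apply: eq_bigr => b _.
apply/eqP; rewrite -subr_eq0; apply/eqP.
transitivity (x a 0 * y b 0 * (Cc a b k * (d k - d a - d b))); first by ring.
by rewrite H mulr0.
Qed.

Lemma diag_ip : (forall i, 0 < g i) -> is_inner_product Gd.
Proof.
move=> gpos; split; first by rewrite /Gd tr_diag_mx.
move=> x x0.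
have [i Hi] : exists i, x i 0 != 0.
  apply/existsP; apply: contraR x0 => /existsPn H.
  by apply/eqP/matrixP => a c; rewrite (ord1 c) mxE; apply/eqP/negPn/H.
rewrite /ip mul_mx_diag mxE (bigD1 i) //= !mxE.
apply: (@lt_le_trans _ _ (x i 0 * g i * x i 0)).
  rewrite mulrAC -expr2 mulr_gt0 // lt0r sqr_ge0 andbT.
  by rewrite expf_neq0.
rewrite lerDl sumr_ge0 // => a _; rewrite !mxE mulrAC -expr2 mulr_ge0 ?sqr_ge0 //.
exact: ltW.
Qed.
End Gen.

Notation R := Rdefinitions.R.

Definition Cu (lam : R) (a b k : nat) : R :=
  match a, b, k with
  | 0, 1, 3 => 1 | 0, 2, 5 => 1 | 0, 3, 4 => 1 | 0, 4, 6 => 1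
  | 1, 2, 4 => lam | 1, 3, 5 => 1 | 1, 5, 6 => 1 | 2, 3, 6 => 1 - lam
  | _, _, _ => 0 end.

Definition Cf lam (a b k : nat) : R :=
  if (a < b)%N then Cu lam a b k else if (b < a)%N then - Cu lam b a k else 0.

Lemma e7E (x : nat) (k : 'I_7) : (x < 7)%N -> e7 x k 0 = (k == x :> nat)%:R.
Proof. by move=> hx; rewrite /e7 mxE -val_eqE /= inordK // eqxx andbT. Qed.

Lemma scE (c : R) (u : 'cV[R]_7) i j : (c *: u) i j = c * u i j.
Proof. by rewrite mxE. Qed.

Lemma upperE lam (a b : nat) (k : 'I_7) : (nlam_upper lam a b) k 0 = Cu lam a b k.
Proof.
rewrite /nlam_upper /Cu.
case: a => [|[|[|a]]]; case: b => [|[|[|[|[|[|b]]]]]];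
  rewrite ?scE ?e7E // ?mxE //; case: k => [[|[|[|[|[|[|[|k]]]]]]] Hk] //=;
  by rewrite ?mulr1 ?mulr0.
Qed.

Lemma CcE lam (a b k : 'I_7) : Cc (n_lambda lam) a b k = Cf lam a b k.
Proof.
rewrite /Cc /n_lambda /Cf; case: ifP => _; first exact: upperE.
by case: ifP => _; rewrite mxE ?upperE.
Qed.

Definition GamF lam (gn : nat -> R) (a b k : nat) : R :=
  2^-1 * (Cf lam a b k - (gn k)^-1 * gn b * Cf lam a k b - (gn k)^-1 * gn a * Cf lam b k a).

Lemma GamE lam (gn : nat -> R) (a b k : 'I_7) :
  Gam (n_lambda lam) (fun i : 'I_7 => gn (i : nat)) a b k = GamF lam gn a b k.
Proof. by rewrite /Gam /GamF !CcE. Qed.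

Lemma ricF lam (gn : nat -> R) (j i : 'I_7) : (forall k, gn k != 0) ->
  ric (n_lambda lam) (Gd (fun i : 'I_7 => gn (i : nat))) (delta_mx j 0) (delta_mx i 0) =
  \sum_(l < 7) (\sum_(b < 7) GamF lam gn j i b * GamF lam gn l b l
    - \sum_(b < 7) GamF lam gn l i b * GamF lam gn j b l
    - \sum_(a < 7) Cf lam l j a * GamF lam gn a i l).
Proof.
move=> gnz; rewrite ricE //.
apply: eq_bigr => l _.
congr (_ - _ - _); apply: eq_bigr => b _; by rewrite ?GamE ?CcE.
Qed.

Definition Yv lam (gn : nat -> R) (b : nat) : R :=
  match b with
  | 1 => gn 3 / (gn 0 * gn 1)
  | 2 => gn 5 / (gn 0 * gn 2)
  | 3 => gn 4 / (gn 0 * gn 3)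
  | 4 => gn 6 / (gn 0 * gn 4)
  | 5 => lam ^+ 2 * gn 4 / (gn 1 * gn 2)
  | 6 => gn 5 / (gn 1 * gn 3)
  | 7 => gn 6 / (gn 1 * gn 5)
  | _ => (1 - lam) ^+ 2 * gn 6 / (gn 2 * gn 3)
  end.

Definition rr lam gn (k : nat) : R :=
  let Y := Yv lam gn in
  match k with
  | 0 => - (Y 1 + Y 2 + Y 3 + Y 4) / 2
  | 1 => - (Y 1 + Y 5 + Y 6 + Y 7) / 2
  | 2 => - (Y 2 + Y 5 + Y 8) / 2
  | 3 => (Y 1 - Y 3 - Y 6 - Y 8) / 2
  | 4 => (Y 3 + Y 5 - Y 4) / 2
  | 5 => (Y 2 + Y 6 - Y 7) / 2
  | _ => (Y 4 + Y 7 + Y 8) / 2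
  end.

Definition S7 (f : nat -> R) : R := f 0%N + f 1%N + f 2%N + f 3%N + f 4%N + f 5%N + f 6%N.

Lemma sum7 (f : nat -> R) : \sum_(i < 7) f i = S7 f.
Proof. by rewrite !big_ord_recr big_ord0 /= add0r. Qed.

Lemma ricS lam (gn : nat -> R) (j i : 'I_7) : (forall k, gn k != 0) ->
  ric (n_lambda lam) (Gd (fun i : 'I_7 => gn (i : nat))) (delta_mx j 0) (delta_mx i 0) =
  S7 (fun l => S7 (fun b => GamF lam gn j i b * GamF lam gn l b l)
    - S7 (fun b => GamF lam gn l i b * GamF lam gn j b l)
    - S7 (fun a => Cf lam l j a * GamF lam gn a i l)).
Proof.
move=> gnz; rewrite ricF // -sum7; apply: eq_bigr => l _.
by rewrite -!sum7.
Qed.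

Lemma Mentry lam (gn : nat -> R) (gnz : forall k, gn k != 0) (i j : 'I_7) :
  ric (n_lambda lam) (Gd (fun i : 'I_7 => gn (i : nat))) (delta_mx j 0) (delta_mx i 0) =
  if i == j then gn i * rr lam gn i else 0.
Proof.
rewrite ricS //.
case: i => [[|[|[|[|[|[|[|i]]]]]]] Hi] //; case: j => [[|[|[|[|[|[|[|j]]]]]]] Hj] //;
  rewrite /S7 /GamF /Cf /Cu /= /rr /Yv; field; repeat split; rewrite ?gnz ?pnatr_eq0 //.
Qed.

Definition gnF (p q m r : R) (k : nat) : R :=
  match k with
  | 0 => 1 | 1 => r | 2 => 2 * (m + 1) * r ^+ 2 / q | 3 => (m + 1) * r
  | 4 => 2 * (m + 1) * r | 5 => 2 * (m + 1) * r ^+ 2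
  | 6 => 2 * (m + 1) * (p + 1) * r | _ => 1 end.

Definition dn (k : nat) : R :=
  match k with 0 | 1 => 2 | 2 | 3 => 4 | 4 | 5 => 6 | _ => 8 end.

Section Vals.
Variables (lam p q m r : R).
Hypotheses (hp : 0 <= p) (hq : 0 < q) (hm : 0 <= m) (hr : 0 < r).
Hypothesis hs : p + q + m = 1 + 1 + 1.
Hypothesis hpr : p * (p + 1) = lam * lam * (q * (q + 1)).
Hypothesis hmr : m * (m + 1) = (1 - lam) * (1 - lam) * (q * (q + 1)).
Hypothesis hr2 : r ^+ 2 * (q + 1) = p + 1.

Let gn := gnF p q m r.

Lemma p1_gt0 : 0 < p + 1. Proof. by rewrite ltr_wpDl. Qed.
Lemma m1_gt0 : 0 < m + 1. Proof. by rewrite ltr_wpDl. Qed.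
Lemma q1_gt0 : 0 < q + 1. Proof. by rewrite ltr_wpDl // ltW. Qed.

Lemma gn_pos k : 0 < gn k.
Proof.
have := p1_gt0; have := m1_gt0 => h1 h2.
case: k => [|[|[|[|[|[|[|k]]]]]]] //=; rewrite ?mulr_gt0 ?divr_gt0 ?exprn_gt0 ?invr_gt0 //.
Qed.

Lemma gn_nz k : gn k != 0.
Proof. by rewrite gt_eqF // gn_pos. Qed.

Let rnz : r != 0. Proof. by rewrite gt_eqF. Qed.
Let qnz : q != 0. Proof. by rewrite gt_eqF. Qed.
Let p1nz : p + 1 != 0. Proof. by rewrite gt_eqF // p1_gt0. Qed.
Let m1nz : m + 1 != 0. Proof. by rewrite gt_eqF // m1_gt0. Qed.
Let q1nz : q + 1 != 0. Proof. by rewrite gt_eqF // q1_gt0. Qed.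

Lemma r2E : r ^+ 2 = (p + 1) / (q + 1).
Proof. by rewrite -hr2 mulfK. Qed.

Ltac fld := field; rewrite ?rnz ?qnz ?p1nz ?m1nz ?q1nz ?pnatr_eq0 //.

Lemma Yv1 : Yv lam gn 1 = m + 1. Proof. rewrite /Yv /gn /=. fld. Qed.
Lemma Yv2 : Yv lam gn 2 = q. Proof. rewrite /Yv /gn /=. fld. Qed.
Lemma Yv3 : Yv lam gn 3 = 2. Proof. rewrite /Yv /gn /=. fld. Qed.
Lemma Yv4 : Yv lam gn 4 = p + 1. Proof. rewrite /Yv /gn /=. fld. Qed.
Lemma Yv6 : Yv lam gn 6 = 2. Proof. rewrite /Yv /gn /=. fld. Qed.
Lemma Yv5 : Yv lam gn 5 = p.
Proof.
rewrite /Yv /gn /=.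
transitivity (lam ^+ 2 * q / r ^+ 2); first by fld.
rewrite r2E.
transitivity (lam * lam * (q * (q + 1)) / (p + 1)); first by fld.
rewrite -hpr; fld.
Qed.
Lemma Yv7 : Yv lam gn 7 = q + 1.
Proof.
rewrite /Yv /gn /=.
transitivity ((p + 1) / r ^+ 2); first by fld.
rewrite r2E; fld.
Qed.
Lemma Yv8 : Yv lam gn 8 = m.
Proof.
rewrite /Yv /gn /=.
transitivity ((1 - lam) ^+ 2 * (p + 1) * q / ((m + 1) * r ^+ 2)); first by fld.
rewrite r2E.
transitivity ((1 - lam) * (1 - lam) * (q * (q + 1)) / (m + 1)); first by fld.
rewrite -hmr; fld.
Qed.

Lemma rrE k : rr lam gn k = - (11 / 2) + dn k.
Proof.
have hs' : m = 3 - p - q.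
  transitivity (1 + 1 + 1 - p - q); first by rewrite -hs; ring.
  ring.
case: k => [|[|[|[|[|[|[|k]]]]]]];
  rewrite /rr /dn ?Yv1 ?Yv2 ?Yv3 ?Yv4 ?Yv5 ?Yv6 ?Yv7 ?Yv8 ?hs'; field; by [].
Qed.
End Vals.

Lemma deriv_ok lam : is_derivation (n_lambda lam) (diag_mx (\row_i dn i)).
Proof.
apply: diag_deriv => a b k; rewrite CcE.
case: a => [[|[|[|[|[|[|[|a]]]]]]] Ha] //; case: b => [[|[|[|[|[|[|[|b]]]]]]] Hb] //;
  case: k => [[|[|[|[|[|[|[|k]]]]]]] Hk] //; rewrite /Cf /Cu /dn /=;
  rewrite ?oppr0 ?mul0r //; ring.
Qed.

Theorem mainTheorem20 (lam : Rdefinitions.R) :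
  einstein_nilradical (n_lambda lam).
Proof.
have [p [q [m [hp [hq [hm [hs [hpr hmr]]]]]]]] := exists_pqm lam.
have hp' : 0 <= p by apply/RleP.
have hq' : 0 < q by apply/RltP.
have hm' : 0 <= m by apply/RleP.
have hs' : (p + q + m = 1 + 1 + 1)%R := hs.
have hpr' : (p * (p + 1) = lam * lam * (q * (q + 1)))%R := hpr.
have hmr' : (m * (m + 1) = (1 - lam) * (1 - lam) * (q * (q + 1)))%R := hmr.
have hp1 : 0 < p + 1 by rewrite ltr_wpDl.
have hq1 : 0 < q + 1 by rewrite ltr_wpDl // ltW.
pose r := Num.sqrt ((p + 1) / (q + 1)).
have hr : 0 < r by rewrite sqrtr_gt0 divr_gt0.
have hr2 : r ^+ 2 * (q + 1) = p + 1.
  by rewrite sqr_sqrtr ?divr_ge0 ?ltW // mulfVK // gt_eqF.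
pose gn := gnF p q m r.
have gnz : forall k, gn k != 0 := gn_nz hp' hq' hm' hr.
exists (Gd (fun i : 'I_7 => gn i)); split.
  by apply: diag_ip => i; apply: gn_pos.
exists (- (11 / 2)), (diag_mx (\row_i dn i)); split; first exact: deriv_ok.
rewrite ricciE; last by move=> i; apply: gnz.
apply/matrixP => i j; rewrite !mxE Mentry //.
have [->|_] := eqVneq i j; last by rewrite mulr0 !mulr0n addr0.
rewrite mulKf // (rrE hp' hq' hm' hr hs' hpr' hmr' hr2) !mulr1n //.
Qed.
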